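(* Let $R=\mathbb{Z}[i]$ and $\mu_4=\{1,i,-1,-i\}\subset R^\times$ (with $\iota$ the inclusion). Then: (i) $X=1+2i$ is an $\mathbb{S}[\mu_{4,+}]$-generator of $R$, i.e. every element of $R$ is uniquely a finite sum $\sum_k\alpha_kX^k$ with $\alpha_k\in\{0,1,i,-1,-i\}$; (ii) the hold is given by $0+1=1$ and $1+1=i-iX$, $i+1=-i+X$, $-i+1=-1-iX$; (iii) the field $R_1=R/XR$ is the finite field $\mathbb{F}_5$; (iv) the projective limit $\varprojlim_mR_m$ (with $R_m=R/X^mR$) is the Witt ring $W(\mathbb{F}_5)=\mathbb{Z}_5$, and $R_m$ is the quotient of $W(\mathbb{F}_5)$ by $5^mW(\mathbb{F}_5)$.
   Context: The hold records, for each $\xi\in\mu_4$, the unique representation of $\xi+1$ as a finite sum $\sum_k\alpha_kX^k$ with $\alpha_k\in\mu_4\cup\{0\}$ (for $\xi=-1$ this is the empty sum). $W(\mathbb{F}_5)=\mathbb{Z}_5$ is the ring of $5$-adic integers. *)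

(* Defs.v *)
From mathcomp Require Import all_boot all_order all_algebra all_field.
Set Implicit Arguments. Unset Strict Implicit. Unset Printing Implicit Defensive.
Import Order.TTheory GRing.Theory Num.Theory.
Local Open Scope ring_scope.

(* R = Z[i] as a subring of the algebraic complex numbers *)
Definition gaussInt : pred algC :=
  fun z => ('Re z \is a Num.int) && ('Im z \is a Num.int).

Definition X0 : algC := 1 + 2 * 'i.

Definition digits_set : seq algC := [:: 0; 1; 'i; -1; -'i].

Definition digit_sum (s : seq algC) : algC :=
  \sum_(k < size s) s`_k * X0 ^+ k.

(* normalised digit sequence: digits in {0,1,i,-1,-i}, no trailing zero
   (so the finite sum is represented without padding zeros) *)
Definition is_digit_seq (s : seq algC) : bool :=
  all (fun a => a \in digits_set) s && (last 1 s != 0).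

Definition gdvd (a b : algC) : Prop := exists2 c, c \in gaussInt & b = a * c.

(* Main.v *)
Require Import Defs.
From mathcomp Require Import all_boot all_order all_algebra all_field.
From mathcomp Require Import zify ring lra.
Import Order.TTheory GRing.Theory Num.Theory.
Local Open Scope ring_scope.
Set Implicit Arguments. Unset Strict Implicit. Unset Printing Implicit Defensive.

Definition gi (a b : int) : algC := a%:~R + 'i * b%:~R.

Lemma Re_gi a b : 'Re (gi a b) = a%:~R.
Proof. by rewrite /gi Re_rect // Rreal_int // intr_int. Qed.
Lemma Im_gi a b : 'Im (gi a b) = b%:~R.
Proof. by rewrite /gi Im_rect // Rreal_int // intr_int. Qed.

Lemma gi_inj a b c d : gi a b = gi c d -> a = c /\ b = d.
Proof.
move=> h; have := Re_gi a b; have := Im_gi a b; rewrite h Re_gi Im_gi.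
by move=> /eqP; rewrite eqr_int => /eqP -> /eqP; rewrite eqr_int => /eqP ->.
Qed.

Lemma gaussP z : z \in gaussInt <-> exists a b, z = gi a b.
Proof.
split.
  case/andP => /intrP[a ha] /intrP[b hb]; exists a, b.
  by rewrite [LHS]algCrect ha hb /gi.
by case=> a [b ->]; apply/andP; rewrite Re_gi Im_gi !intr_int.
Qed.

Lemma sqi : 'i * 'i = -1 :> algC.
Proof. by rewrite -expr2 sqrCi. Qed.

Lemma giM a b c d : gi a b * gi c d = gi (a * c - b * d) (a * d + b * c).
Proof.
have e: forall x y : algC, x - y = 0 -> x = y by move=> x y /eqP; rewrite subr_eq0 => /eqP.
apply: e; rewrite /gi.
transitivity ((b * d)%:~R * ('i * 'i + 1) : algC); first by rewrite ?rmorphD ?rmorphB ?rmorphM /=; ring.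
by rewrite sqi addNr mulr0.
Qed.

Lemma giD a b c d : gi a b + gi c d = gi (a + c) (b + d).
Proof. by rewrite /gi !rmorphD /=; ring. Qed.
Lemma giN a b : - gi a b = gi (- a) (- b).
Proof. by rewrite /gi !rmorphN /=; ring. Qed.
Lemma gi_int n : n%:~R = gi n 0.
Proof. by rewrite /gi; ring. Qed.
Lemma gi_i : 'i = gi 0 1.
Proof. by rewrite /gi; ring. Qed.
Lemma X0_gi : X0 = gi 1 2.
Proof. by rewrite /gi /X0; ring. Qed.

Definition X1 : algC := gi 1 (-2).

Lemma gaussD x y : x \in gaussInt -> y \in gaussInt -> x + y \in gaussInt.
Proof. by move=> /gaussP[a[b->]] /gaussP[c[d->]]; apply/gaussP; rewrite giD; eauto. Qed.
Lemma gaussN x : x \in gaussInt -> - x \in gaussInt.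
Proof. by move=> /gaussP[a[b->]]; apply/gaussP; rewrite giN; eauto. Qed.
Lemma gaussB x y : x \in gaussInt -> y \in gaussInt -> x - y \in gaussInt.
Proof. by move=> hx hy; exact: (gaussD hx (gaussN hy)). Qed.
Lemma gaussM x y : x \in gaussInt -> y \in gaussInt -> x * y \in gaussInt.
Proof. by move=> /gaussP[a[b->]] /gaussP[c[d->]]; apply/gaussP; rewrite giM; eauto. Qed.
Lemma gauss_gi a b : gi a b \in gaussInt.
Proof. by apply/gaussP; eauto. Qed.
Lemma gauss_int n : n%:~R \in gaussInt.
Proof. by rewrite gi_int gauss_gi. Qed.
Lemma gauss0 : 0 \in gaussInt.
Proof. by have := gauss_int 0; rewrite mulr0z. Qed.
Lemma gauss1 : 1 \in gaussInt.
Proof. by have := gauss_int 1; rewrite mulr1z. Qed.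
Lemma gaussX x n : x \in gaussInt -> x ^+ n \in gaussInt.
Proof. by move=> hx; elim: n => [|n IH]; rewrite ?expr0 ?gauss1 // exprS gaussM. Qed.
Lemma gaussX0 : X0 \in gaussInt.
Proof. by rewrite X0_gi gauss_gi. Qed.
Lemma gaussX1 : X1 \in gaussInt.
Proof. by rewrite gauss_gi. Qed.

Lemma X0X1 : X0 * X1 = 5.
Proof. by rewrite X0_gi /X1 giM /gi; ring. Qed.
Lemma X0pX1 : X0 + X1 = 2.
Proof. by rewrite X0_gi /X1 giD /gi; ring. Qed.
Lemma X0_neq0 : X0 != 0.
Proof. by apply/eqP => h; have := X0X1; rewrite h mul0r => /eqP; rewrite eq_sym pnatr_eq0. Qed.
Lemma X1_neq0 : X1 != 0.
Proof. by apply/eqP => h; have := X0X1; rewrite h mulr0 => /eqP; rewrite eq_sym pnatr_eq0. Qed.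

Lemma gdvd_trans p q r : gdvd p q -> gdvd q r -> gdvd p r.
Proof. by case=> c hc -> [d hd ->]; exists (c * d); [apply: gaussM | rewrite mulrA]. Qed.
Lemma gdvdD p x y : gdvd p x -> gdvd p y -> gdvd p (x + y).
Proof. by case=> c hc -> [d hd ->]; exists (c + d); [apply: gaussD | rewrite mulrDr]. Qed.
Lemma gdvdN p x : gdvd p x -> gdvd p (- x).
Proof. by case=> c hc ->; exists (- c); [apply: gaussN | rewrite mulrN]. Qed.
Lemma gdvdB p x y : gdvd p x -> gdvd p y -> gdvd p (x - y).
Proof. by move=> h1 h2; apply: gdvdD h1 (gdvdN h2). Qed.
Lemma gdvd_mull p x r : r \in gaussInt -> gdvd p x -> gdvd p (r * x).
Proof. by move=> hr [c hc ->]; exists (r * c); [apply: gaussM | rewrite mulrCA]. Qed.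
Lemma gdvd_mulr p r : r \in gaussInt -> gdvd p (p * r).
Proof. by move=> hr; exists r. Qed.
Lemma gdvd_id p : gdvd p p.
Proof. by exists 1; rewrite ?gauss1 ?mulr1. Qed.
Lemma gdvd1 x : x \in gaussInt -> gdvd 1 x.
Proof. by move=> hx; exists x; rewrite ?mul1r. Qed.
Lemma gdvd_cancel r p q : r != 0 -> gdvd (r * p) (r * q) -> gdvd p q.
Proof. by move=> hr [c hc]; rewrite -mulrA => /(mulfI hr) ->; exists c. Qed.
Lemma gdvd_mul2 r p q : gdvd p q -> gdvd (r * p) (r * q).
Proof. by case=> c hc ->; exists c; rewrite ?mulrA. Qed.

Lemma conj_gi a b : (gi a b)^* = gi a (- b).
Proof. by rewrite /gi rmorphD rmorphM /= conjCi !rmorph_int rmorphN /=; ring. Qed.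
Lemma gauss_conj x : x \in gaussInt -> x^* \in gaussInt.
Proof. by move=> /gaussP[a[b->]]; rewrite conj_gi gauss_gi. Qed.
Lemma conj_X0 : X0^* = X1.
Proof. by rewrite X0_gi conj_gi. Qed.

Section Cop.
Variables Y Y' : algC.
Hypotheses (hY : Y \in gaussInt) (hY' : Y' \in gaussInt) (e1 : Y * Y' = 5) (e2 : Y + Y' = 2).

Lemma Yneq0 : Y != 0.
Proof. by apply/eqP => h; move: e1; rewrite h mul0r => /eqP; rewrite eq_sym pnatr_eq0. Qed.

Lemma cop1 a : a \in gaussInt -> gdvd Y (a * Y') -> gdvd Y a.
Proof.
move=> ha [c hc e]; exists (a * Y' - 2 * (a + c)).
  by apply: gaussB; [apply: gaussM | apply: gaussM; [exact: (gauss_int 2) | apply: gaussD]].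
transitivity (a * (Y * Y') - 2 * (a * Y + Y * c)); last by ring.
rewrite e1 -e -mulrDr e2; ring.
Qed.

Lemma copk k a : a \in gaussInt -> gdvd (Y ^+ k) (a * Y') -> gdvd (Y ^+ k) a.
Proof.
elim: k a => [|k IH] a ha; first by rewrite expr0 => _; apply: gdvd1.
move=> h; have h1 : gdvd Y (a * Y').
  by apply: (gdvd_trans _ h); rewrite exprS; apply: gdvd_mulr; apply: gaussX.
have [a' ha' ea] := cop1 ha h1.
rewrite ea exprS; apply: gdvd_mul2; apply: IH => //.
apply: (@gdvd_cancel Y _ _ Yneq0); rewrite -exprS mulrA -ea //.
Qed.

Lemma copkj j k a : a \in gaussInt -> gdvd (Y ^+ k) (a * Y' ^+ j) -> gdvd (Y ^+ k) a.
Proof.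
elim: j a => [|j IH] a ha; first by rewrite expr0 mulr1.
rewrite exprS mulrA => h; apply: copk => //; apply: IH => //.
by apply: gaussM.
Qed.
End Cop.

Lemma kernel m n : gdvd (X0 ^+ m) n%:~R <-> ((5 ^ m)%:Z %| n)%Z.
Proof.
split; last first.
  case/dvdzP => q ->; exists (X1 ^+ m * q%:~R).
    by apply: gaussM; [apply: gaussX; apply: gaussX1 | apply: gauss_int].
  by rewrite mulrA -exprMn X0X1 rmorphM /= mulrC -natrX -pmulrn.
case=> c hc e.
have e' : n%:~R = X1 ^+ m * c^*.
  by rewrite -conj_X0 -rmorphXn -rmorphM -e rmorph_int.
have : gdvd (X0 ^+ m) (c^* * X1 ^+ m) by rewrite mulrC -e' e; apply: gdvd_mulr.
case/(copkj gaussX0 gaussX1 X0X1 X0pX1 (gauss_conj hc)) => d hd ed.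
move: e'; rewrite ed mulrA -exprMn [X1 * X0]mulrC X0X1.
have -> : 5 ^+ m = ((5 ^ m)%N%:Z)%:~R :> algC by rewrite -natrX.
case/gaussP: hd => p [q ->]; rewrite (gi_int n) (gi_int (5 ^ m)%N) giM.
case/gi_inj => -> _; apply/dvdzP; exists p; ring.
Qed.

Lemma geom_dvd w m : w \in gaussInt -> gdvd (1 - w) (1 - w ^+ m).
Proof.
move=> hw; elim: m => [|m IH]; first by rewrite expr0 subrr; exists 0; rewrite ?gauss0 ?mulr0.
have -> : 1 - w ^+ m.+1 = (1 - w ^+ m) + w ^+ m * (1 - w) by rewrite exprSr; ring.
apply: gdvdD IH _; apply: gdvd_mull; [exact: gaussX | exact: gdvd_id].
Qed.

Lemma onto m z : z \in gaussInt -> exists n : int, gdvd (X0 ^+ m) (z - n%:~R).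
Proof.
move=> hz; elim: m => [|m [n [c hc e]]].
  by exists 0; rewrite expr0; apply: gdvd1; apply: gaussB => //; apply: gauss_int.
case/gaussP: (hc) => a [b ec].
have [k ek] : exists k : int, k = a + 2 * b by eauto.
exists (n + (5 ^ m)%N%:Z * (k * 3 ^+ m)).
have e5 : ((5 ^ m)%N%:Z)%:~R = X0 ^+ m * X1 ^+ m :> algC by rewrite -exprMn X0X1 -natrX.
have -> : z - (n + (5 ^ m)%N%:Z * (k * 3 ^+ m))%:~R
        = X0 ^+ m * (c - (3 * X1) ^+ m * k%:~R).
  rewrite !rmorphD !rmorphM /= e5 rmorphXn /= exprMn.
  have -> : z = (z - n%:~R) + n%:~R by ring.
  rewrite e; ring.
rewrite exprSr; apply: gdvd_mul2.
have -> : c - (3 * X1) ^+ m * k%:~R = (c - k%:~R) + k%:~R * (1 - (3 * X1) ^+ m) by ring.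
apply: gdvdD.
  exists (gi 0 b); first exact: gauss_gi.
  by rewrite ec X0_gi (gi_int k) giN giD giM ek; congr gi; ring.
apply: gdvd_mull; first exact: gauss_int.
apply: (@gdvd_trans _ (1 - 3 * X1)); last by apply: geom_dvd; apply: gaussM => //; [exact: (gauss_int 3) | exact: gaussX1].
exists (gi 2 2); first exact: gauss_gi.
by rewrite X0_gi giM /X1 /gi; ring.
Qed.
Lemma sq_ge (a : int) : a <= a * a /\ - a <= a * a.
Proof. split; nia. Qed.

Lemma normdec (a b d1 d2 w1 w2 : int) :
  (d1 = 0 /\ d2 = 0) \/ (d1 = 1 /\ d2 = 0) \/ (d1 = 0 /\ d2 = 1) \/ (d1 = -1 /\ d2 = 0) \/ (d1 = 0 /\ d2 = -1) ->
  a = d1 + w1 - 2*w2 -> b = d2 + 2*w1 + w2 -> (a != 0) || (b != 0) -> w1*w1 + w2*w2 < a*a + b*b.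
Proof.
move=> hd ea eb hab.
have h5 : 5 * (w1*w1 + w2*w2) = a*a + b*b - 2*(d1*a + d2*b) + (d1*d1 + d2*d2) by rewrite ea eb; ring.
have [ha1 ha2] := sq_ge a; have [hb1 hb2] := sq_ge b.
have hA : a != 0 -> 1 <= a * a by move=> h; lia.
have hB : b != 0 -> 1 <= b * b by move=> h; lia.
have hAB : 1 <= a * a + b * b.
  case/orP: hab => h; [have := hA h | have := hB h]; have := sq_ge a; have := sq_ge b; lia.
move: h5 hAB ha1 ha2 hb1 hb2.
move: (a * a) (b * b) (w1*w1 + w2*w2) => A B W.
case: hd => [[-> ->]|[[-> ->]|[[-> ->]|[[-> ->]|[-> ->]]]]]; lia.
Qed.

Definition Dg (d1 d2 : int) := (d1 = 0 /\ d2 = 0) \/ (d1 = 1 /\ d2 = 0) \/ (d1 = 0 /\ d2 = 1) \/ (d1 = -1 /\ d2 = 0) \/ (d1 = 0 /\ d2 = -1).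

Lemma step a b : exists d1 d2 w1 w2 : int,
  [/\ Dg d1 d2, a = d1 + w1 - 2*w2 & b = d2 + 2*w1 + w2].
Proof.
have e := divz_eq (a + 2 * b) 5.
have h0 : (0 <= ((a + 2 * b) %% 5)%Z) by apply: modz_ge0.
have h1 : (((a + 2 * b) %% 5)%Z < 5) by apply: ltz_pmod.
move: e h0 h1; move: ((a + 2 * b) %/ 5)%Z ((a + 2 * b) %% 5)%Z => q r e h0 h1.
have : r = 0 \/ r = 1 \/ r = 2 \/ r = 3 \/ r = 4 by lia.
rewrite /Dg.
case=> [hr|[hr|[hr|[hr|hr]]]].
- exists 0, 0, q, (b - 2 * q); split; [by left| lia | lia].
- exists 1, 0, q, (b - 2 * q); split; [by right; left| lia | lia].
- exists 0, 1, q, (b - 1 - 2 * q); split; [by right; right; left| lia | lia].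
- exists 0, (-1), (q + 1), (b + 1 - 2 * (q + 1)); split; [by right; right; right; right| lia | lia].
- exists (-1), 0, (q + 1), (b - 2 * (q + 1)); split; [by right; right; right; left| lia | lia].
Qed.

Lemma Dg_digit d1 d2 : Dg d1 d2 -> gi d1 d2 \in digits_set.
Proof.
rewrite /digits_set !inE.
case=> [[-> ->]|[[-> ->]|[[-> ->]|[[-> ->]|[-> ->]]]]]; apply/orP.
- by left; apply/eqP; rewrite /gi; ring.
- by right; apply/orP; left; apply/eqP; rewrite /gi; ring.
- by right; apply/orP; right; apply/orP; left; apply/eqP; rewrite /gi; ring.
- by right; apply/orP; right; apply/orP; right; apply/orP; left; apply/eqP; rewrite /gi; ring.
- by right; apply/orP; right; apply/orP; right; apply/orP; right; apply/eqP; rewrite /gi; ring.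
Qed.

Lemma digit_sum_cons d s : digit_sum (d :: s) = d + X0 * digit_sum s.
Proof.
rewrite /digit_sum /= big_ord_recl /= expr0 mulr1 mulr_sumr; congr (_ + _).
by apply: eq_bigr => i _; rewrite exprS mulrCA.
Qed.

Lemma gi00 : gi 0 0 = 0.
Proof. by rewrite /gi; ring. Qed.

Lemma ds_nil : digit_sum [::] = 0.
Proof. by rewrite /digit_sum big_ord0. Qed.

Lemma tail_digit x s : is_digit_seq (x :: s) -> is_digit_seq s.
Proof.
case: s => [|y t]; rewrite /is_digit_seq /=; first by rewrite oner_neq0.
by case/andP => /andP[_ ->] ->.
Qed.

Lemma digitP x : x \in digits_set -> exists d1 d2, Dg d1 d2 /\ x = gi d1 d2.
Proof.
rewrite /digits_set !inE /Dg.
case/orP=> [/eqP->|/orP[/eqP->|/orP[/eqP->|/orP[/eqP->|/eqP->]]]].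
- by exists 0, 0; split; [left | rewrite /gi; ring].
- by exists 1, 0; split; [right; left | rewrite /gi; ring].
- by exists 0, 1; split; [right; right; left | rewrite /gi; ring].
- by exists (-1), 0; split; [right; right; right; left | rewrite /gi; ring].
- by exists 0, (-1); split; [right; right; right; right | rewrite /gi; ring].
Qed.

Lemma gdvd_X0_5 a b : gdvd X0 (gi a b) -> exists q, a + 2 * b = q * 5.
Proof.
case=> c /gaussP[p [q ->]]; rewrite X0_gi giM => /gi_inj [-> ->].
by exists p; ring.
Qed.

Lemma digit_dvd x y : x \in digits_set -> y \in digits_set -> gdvd X0 (x - y) -> x = y.
Proof.
case/digitP => d1 [d2 [hd ->]]; case/digitP => e1 [e2 [he ->]].
rewrite giN giD => /gdvd_X0_5 [q hq].
have [-> ->] : d1 = e1 /\ d2 = e2 by move: hd he; rewrite /Dg; lia.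
by [].
Qed.

Lemma digit_gauss x : x \in digits_set -> x \in gaussInt.
Proof. by case/digitP => d1 [d2 [_ ->]]; apply: gauss_gi. Qed.

Lemma ds_gauss s : all (fun a => a \in digits_set) s -> digit_sum s \in gaussInt.
Proof.
elim: s => [|x s IH]; first by rewrite ds_nil gauss0.
case/andP => hx hs; rewrite digit_sum_cons; apply: gaussD; first exact: digit_gauss.
by apply: gaussM; [exact: gaussX0 | exact: IH].
Qed.

Lemma ds_zero s : is_digit_seq s -> digit_sum s = 0 -> s = [::].
Proof.
elim: s => [//|x s IH] hs.
have hs' := tail_digit hs.
move: (hs); rewrite /is_digit_seq /= => /andP [/andP [hx hall] hl].
rewrite digit_sum_cons => e.
have ex : x = 0.
  apply: digit_dvd => //; first by rewrite /digits_set inE eqxx.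
  exists (- digit_sum s); first by apply: gaussN; apply: ds_gauss.
  by rewrite subr0 mulrN; apply/eqP; rewrite -addr_eq0 e.
move: e; rewrite ex add0r => /eqP; rewrite mulf_eq0 (negbTE X0_neq0) /= => /eqP /(IH hs') es.
by move: hl; rewrite es ex /= eqxx.
Qed.

Lemma ds_uniq s t : is_digit_seq s -> is_digit_seq t -> digit_sum s = digit_sum t -> s = t.
Proof.
elim: s t => [|x s IH] [|y t] hs ht //.
- by rewrite ds_nil => /esym /(ds_zero ht).
- by rewrite ds_nil => /(ds_zero hs).
move: (hs) (ht); rewrite /is_digit_seq /= => /andP [/andP [hx hsa] _] /andP [/andP [hy hta] _].
rewrite !digit_sum_cons => e.
have exy : x = y.
  apply: digit_dvd => //.
  exists (digit_sum t - digit_sum s); first by apply: gaussB; apply: ds_gauss.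
  transitivity ((x + X0 * digit_sum s) - y - X0 * digit_sum s); first by ring.
  by rewrite e; ring.
move: e; rewrite exy => /addrI /(mulfI X0_neq0) /(IH _ (tail_digit hs) (tail_digit ht)) ->.
by [].
Qed.

Lemma exist_digits N : forall a b : int, (absz (a * a + b * b)%R < N)%N ->
  exists s, is_digit_seq s /\ gi a b = digit_sum s.
Proof.
elim: N => [//|N IH] a b hN.
have [hab|hab] := boolP ((a != 0) || (b != 0)); last first.
  have [-> ->] : a = 0 /\ b = 0 by move: hab; rewrite negb_or !negbK => /andP[/eqP -> /eqP ->].
  by exists [::]; split; [rewrite /is_digit_seq /= oner_neq0 | rewrite gi00 ds_nil].
have [d1 [d2 [w1 [w2 [hd ea eb]]]]] := step a b.
have hW := normdec hd ea eb hab.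
have hW' : (absz (w1 * w1 + w2 * w2)%R < N)%N by have := sq_ge w1; have := sq_ge w2; lia.
have [s [hs es]] := IH _ _ hW'.
exists (gi d1 d2 :: s); split; last first.
  by rewrite digit_sum_cons -es X0_gi giM giD ea eb; congr gi; ring.
move: hs; rewrite /is_digit_seq /= Dg_digit //=.
case: s es => [|y t] es /=; last by [].
move=> _; apply/eqP => h0.
move: es; rewrite ds_nil -gi00 => /gi_inj [hw1 hw2].
move: h0; rewrite -gi00 => /gi_inj [hd1 hd2].
by move: hab; rewrite ea eb hw1 hw2 hd1 hd2.
Qed.

Lemma part_i z : z \in gaussInt -> exists! s : seq algC, is_digit_seq s /\ z = digit_sum s.
Proof.
case/gaussP => a [b ->].
have [s [hs es]] := exist_digits (ltnSn (absz (a * a + b * b))).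
exists s; split => // t [ht et].
by apply: ds_uniq => //; rewrite -es -et.
Qed.

Lemma ieq (k : algC) (x y : algC) : x - y = k * ('i * 'i + 1) -> x = y.
Proof. by rewrite sqi addNr mulr0 => /eqP; rewrite subr_eq0 => /eqP. Qed.

Theorem proposition6p10 :
  [/\
   (* (i) X = 1+2i is a generator: unique digit expansion of every element of R *)
   (forall z : algC, z \in gaussInt ->
      exists! s : seq algC, is_digit_seq s /\ z = digit_sum s),
   (* (ii) the hold *)
   [/\ 0 + 1 = digit_sum [:: 1],
       1 + 1 = digit_sum [:: 'i; - 'i],
       'i + 1 = digit_sum [:: - 'i; 1],
       - 'i + 1 = digit_sum [:: -1; - 'i]
     & -1 + 1 = digit_sum [::]],
   (* (iii) R_1 = R/XR is F_5: the ring map Z -> R/XR is onto with kernel 5Z *)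
   (forall z : algC, z \in gaussInt -> exists n : int, gdvd X0 (z - n%:~R))
     /\ (forall n : int, gdvd X0 n%:~R <-> (5 %| n)%Z)
   &
   (* (iv) R_m = R/X^m R is Z/5^m Z = W(F_5)/5^m W(F_5), compatibly in m *)
   forall m : nat,
     (forall z : algC, z \in gaussInt ->
        exists n : int, gdvd (X0 ^+ m) (z - n%:~R))
     /\ (forall n : int, gdvd (X0 ^+ m) n%:~R <-> ((5 ^ m)%:Z %| n)%Z)].
Proof.
split.
- exact: part_i.
- rewrite !digit_sum_cons ds_nil /X0; split; rewrite ?mulr0 ?addr0 ?add0r ?addNr //.
  + by apply: (@ieq 2); ring.
  + by apply: (@ieq 0); ring.
  + by apply: (@ieq 2); ring.
- split; first by move=> z hz; have := onto 1 hz; rewrite expr1.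
  by move=> n; have := kernel 1 n; rewrite expr1.
- by move=> m; split; [move=> z hz; exact: onto | exact: kernel].
Qed.
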